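(* Let $A,B\in\mathbb{C}^{n\times n}$ and let $C=A+B$. Then \[|\Lambda(C)|\leq(\operatorname{rank}(B)+1)\,|\Lambda(A)|+d(A)-d(C).\]
   Context: For $M\in\mathbb{C}^{n\times n}$, $\Lambda(M)$ denotes the set of distinct eigenvalues of $M$ and $|\cdot|$ the cardinality of a set. For $\lambda\in\Lambda(M)$, $m_a(M,\lambda)$ is its algebraic multiplicity (multiplicity as a root of the characteristic polynomial) and $m_g(M,\lambda)$ its geometric multiplicity (dimension of the eigenspace). The defectivity of $M$ is $d(M):=\sum_{\lambda\in\Lambda(M)}\big(m_a(M,\lambda)-m_g(M,\lambda)\big)$. *)

(* Defs.v *)
(* Complex numbers are modelled as R[i] = complex R for an
   arbitrary R : realType (every realType is isomorphic to the reals). *)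
From mathcomp Require Import all_boot all_order all_algebra.
From mathcomp Require Import reals complex.
Set Implicit Arguments. Unset Strict Implicit. Unset Printing Implicit Defensive.
Import Order.TTheory GRing.Theory Num.Theory.
Local Open Scope ring_scope.

Section Defs.
Variables (F : fieldType) (n : nat).

Definition is_spectrum (M : 'M[F]_n) (s : seq F) : Prop :=
  uniq s /\ (forall l : F, (l \in s) = eigenvalue M l).

Definition alg_mult (M : 'M[F]_n) (l : F) : nat := mup l (char_poly M).

Definition geo_mult (M : 'M[F]_n) (l : F) : nat := \rank (eigenspace M l).

Definition defectivity (M : 'M[F]_n) (s : seq F) : int :=
  \sum_(l <- s) ((alg_mult M l)%:Z - (geo_mult M l)%:Z).
End Defs.

(* Main.v *)
Require Import Defs.
From mathcomp Require Import all_boot all_order all_algebra.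
From mathcomp Require Import reals complex.
From mathcomp Require Import zify.
Import Order.TTheory GRing.Theory Num.Theory.
Local Open Scope ring_scope.

Lemma sum_count_uniq (T : eqType) (s r : seq T) :
  uniq s -> all (fun x => x \in s) r ->
  (\sum_(l <- s) count_mem l r)%N = size r.
Proof.
move=> us; elim: r => [|x r IH] /=; first by rewrite big1.
move=> /andP[xs ar]; rewrite big_split /= IH //.
rewrite -big_mkcond /= sum1_count.
have -> : count (fun l => x == l) s = count_mem x s.
  by apply: eq_count => l; rewrite eq_sym.
by rewrite count_uniq_mem // xs.
Qed.

Lemma sum_alg (F : closedFieldType) n (M : 'M[F]_n) s :
  is_spectrum M s -> (\sum_(l <- s) alg_mult M l)%N = n.
Proof.
move=> [us hs]; have [r hr] := closed_field_poly_normal (char_poly M).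
have mon := char_poly_monic M.
rewrite (monicP mon) scale1r in hr.
have sz : size r = n.
  have := size_char_poly M; rewrite hr size_prod_XsubC; by case.
rewrite -[RHS]sz -(@sum_count_uniq _ s r us); last first.
  apply/allP => x xr; rewrite hs eigenvalue_root_char hr root_prod_XsubC //.
by apply: eq_bigr => l _; rewrite /alg_mult hr mu_prod_XsubC.
Qed.

Lemma eig_geo (F : fieldType) n (M : 'M[F]_n) l :
  eigenvalue M l = (0 < geo_mult M l)%N.
Proof. by rewrite /eigenvalue /geo_mult lt0n mxrank_eq0. Qed.

Lemma geo_add (F : fieldType) n (A B : 'M[F]_n) l :
  (geo_mult A l <= geo_mult (A + B) l + \rank B)%N.
Proof.
rewrite /geo_mult /eigenspace !mxrank_ker.
have e : A + B - l%:M = (A - l%:M) + B by rewrite addrAC.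
have := mxrank_add (A - l%:M) B; rewrite -e => h.
move: (\rank (A - l%:M)) (\rank (A + B - l%:M)) (\rank B) h => x y z h; lia.
Qed.

Lemma main_ineq (F : closedFieldType) n (A B : 'M[F]_n) (sA sC : seq F) :
  is_spectrum A sA -> is_spectrum (A + B) sC ->
  \sum_(l <- sC) (1 - (geo_mult (A + B) l)%:Z)
   <= \sum_(l <- sA) ((\rank B).+1%:Z - (geo_mult A l)%:Z).
Proof.
move=> [uA hA] [uC hC].
rewrite (bigID (fun l => l \in sA)) /=.
rewrite [X in _ <= X](bigID (fun l => l \in sC)) /=.
apply: lerD.
  rewrite -big_filter -[X in _ <= X]big_filter.
  have pe : perm_eq [seq l <- sC | l \in sA] [seq l <- sA | l \in sC].
    apply: uniq_perm; rewrite ?filter_uniq // => x.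
    by rewrite !mem_filter andbC.
  rewrite (perm_big _ pe) /=.
  apply: ler_sum => l _.
  have := @geo_add _ _ A B l; set a := geo_mult A l; set c := geo_mult (A + B) l.
  move: a c (\rank B) => a c r h; lia.
apply: (@le_trans _ _ 0).
  rewrite big_seq_cond; apply: sumr_le0 => l /andP[lC _].
  move: lC; rewrite hC eig_geo.
  move: (geo_mult (A + B) l) => c hc; lia.
rewrite big_seq_cond; apply: sumr_ge0 => l /andP[lA lC].
have := @geo_add _ _ A B l.
have : ~~ eigenvalue (A + B) l by rewrite -hC.
rewrite eig_geo -leqNgt leqn0 => /eqP ->.
move: (geo_mult A l) (\rank B) => a r h; lia.
Qed.

Lemma PoszS (T : Type) (s : seq T) (f : T -> nat) :
  Posz (\sum_(l <- s) f l)%N = \sum_(l <- s) (f l)%:Z.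
Proof. elim: s => [|x s IH]; rewrite ?big_nil ?big_cons // PoszD IH //. Qed.

Lemma sumconst (T : Type) (s : seq T) (c : int) :
  \sum_(l <- s) c = c * (size s)%:Z.
Proof.
elim: s => [|x s IH]; rewrite ?big_nil ?big_cons ?mulr0 // IH /=.
by rewrite -addn1 PoszD mulrDr mulr1 addrC.
Qed.

Theorem theorem3p1 (R : realType) (n : nat) (A B : 'M[R[i]]_n)
    (sA sC : seq R[i]) :
  is_spectrum A sA -> is_spectrum (A + B) sC ->
  (size sC)%:Z <= ((\rank B).+1)%:Z * (size sA)%:Z
                  + defectivity A sA - defectivity (A + B) sC.
Proof.
move=> hsA hsC.
have m := @main_ineq _ _ A B _ _ hsA hsC.
have eA := @sum_alg _ _ _ _ hsA; have eC := @sum_alg _ _ _ _ hsC.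
rewrite /defectivity !sumrB -!PoszS eA eC.
move: m; rewrite !sumrB !sumconst -!PoszS mul1r.
move: (size sC) (size sA) (\rank B) (\sum_(l <- sA) geo_mult A l)%N
  (\sum_(l <- sC) geo_mult (A + B) l)%N => a b c d e h.
lia.
Qed.
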